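(* Let $p\ge2$ and $0\le r<k$ be integers and $\alpha>k$ real. Then $$\sum_{n=1}^\infty\frac{H_{n+\alpha-r}-H_{n+\alpha-k}}{n^p}=\sum_{i=1}^{p-1}(-1)^{i-1}\zeta(p+1-i)\Big(H_{\alpha-r}^{(i)}-H_{\alpha-k}^{(i)}\Big)+(-1)^{p-1}\sum_{j=1}^{k-r}\frac{H_{j+\alpha-k}}{(j+\alpha-k)^p},$$ and moreover $H_{\alpha-r}^{(i)}-H_{\alpha-k}^{(i)}=\sum_{j=1}^{k-r}(j+\alpha-k)^{-i}$ for every integer $i\ge1$.
   Context: Shifted harmonic numbers: for a real $\alpha$ that is not a negative integer, $H_\alpha := \sum_{k=1}^\infty\left(\frac1k-\frac1{k+\alpha}\right)$ and, for integers $m\ge 2$, $H_\alpha^{(m)} := \sum_{k=1}^\infty\left(\frac1{k^m}-\frac1{(k+\alpha)^m}\right)=\zeta(m)-\zeta(m,\alpha+1)$, where $\zeta$ is the Riemann zeta function and $\zeta(s,\alpha+1)=\sum_{n=1}^\infty (n+\alpha)^{-s}$ is the Hurwitz zeta function; $H_\alpha^{(1)}:=H_\alpha$. Empty sums are $0$. *)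

(* Defs.v *)
From Stdlib Require Import Reals Lra Lia List ClassicalEpsilon.
Import ListNotations.
Open Scope R_scope.

(* Value of a convergent series sum_{n>=0} u n (chosen by classical epsilon;
   it is the genuine sum whenever the series converges). *)
Definition series_val (u : nat -> R) : R :=
  epsilon (inhabits 0) (fun l => infinite_sum u l).

(* Finite sum  sum_{i=m}^{n} f i  (empty, = 0, if n < m). *)
Definition sum_range (m n : nat) (f : nat -> R) : R :=
  fold_right Rplus 0 (map f (seq m (S n - m))).

Definition zeta (s : nat) : R :=
  series_val (fun n => / (INR (S n)) ^ s).

Definition Hm (m : nat) (a : R) : R :=
  series_val (fun n => / (INR (S n)) ^ m - / (INR (S n) + a) ^ m).

Definition H (a : R) : R := Hm 1 a.

(* Main.v *)
Require Import Defs.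
From Coquelicot Require Import Coquelicot.
From Stdlib Require Import Reals Lra Lia List ClassicalEpsilon FunctionalExtensionality ZArith.
Import ListNotations.
Open Scope R_scope.

Lemma cv_inv_S : Un_cv (fun n => / INR (S n)) 0.
Proof.
  apply is_lim_seq_Reals.
  apply (is_lim_seq_incr_1 (fun n => / INR n) 0).
  replace (Finite 0) with (Rbar_inv p_infty) by reflexivity.
  apply is_lim_seq_inv. apply is_lim_seq_INR. discriminate.
Qed.

Lemma cv_squeeze (u v : nat -> R) :
  (forall n, 0 <= u n <= v n) -> Un_cv v 0 -> Un_cv u 0.
Proof.
  intros Huv Hv eps He. destruct (Hv eps He) as [N HN]. exists N.
  intros n Hn. specialize (HN n Hn). specialize (Huv n).
  unfold Rdist in *. rewrite Rminus_0_r in *.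
  rewrite Rabs_right in * by lra. lra.
Qed.

Lemma is_ext (u v : nat -> R) l :
  (forall n, u n = v n) -> infinite_sum u l -> infinite_sum v l.
Proof.
  intros H1 H2. replace v with u; auto. apply functional_extensionality; auto.
Qed.

Lemma is_plus u v a b : infinite_sum u a -> infinite_sum v b ->
  infinite_sum (fun n => u n + v n) (a + b).
Proof.
  rewrite <- !is_series_Reals. intros. apply (is_series_plus u v a b); auto.
Qed.

Lemma is_scal c u a : infinite_sum u a ->
  infinite_sum (fun n => c * u n) (c * a).
Proof.
  rewrite <- !is_series_Reals. intros. apply (is_series_scal c u a); auto.
Qed.

Lemma is_opp u a : infinite_sum u a -> infinite_sum (fun n => - u n) (- a).
Proof.
  intros H1. apply (is_ext (fun n => -1 * u n)). intros; ring.
  replace (-a) with (-1 * a) by ring. apply is_scal; auto.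
Qed.

Lemma is_minus u v a b : infinite_sum u a -> infinite_sum v b ->
  infinite_sum (fun n => u n - v n) (a - b).
Proof.
  intros. apply is_plus; auto. apply is_opp; auto.
Qed.

Lemma is_zero : infinite_sum (fun _ => 0) 0.
Proof.
  intros eps He. exists 0%nat. intros n _.
  replace (sum_f_R0 (fun _ => 0) n) with 0.
  unfold Rdist. rewrite Rminus_0_r, Rabs_R0. lra.
  induction n; simpl; auto. rewrite <- IHn. ring.
Qed.

Lemma tele_sum (g : nat -> R) n :
  sum_f_R0 (fun n => g n - g (S n)) n = g 0%nat - g (S n).
Proof. induction n; simpl; auto. rewrite IHn; ring. Qed.

Lemma tele1 (g : nat -> R) : Un_cv g 0 ->
  infinite_sum (fun n => g n - g (S n)) (g 0%nat).
Proof.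
  intros Hg eps He. destruct (Hg eps He) as [N HN]. exists N. intros n Hn.
  rewrite tele_sum. specialize (HN (S n) ltac:(lia)).
  unfold Rdist in *. replace (g 0%nat - g (S n) - g 0%nat) with (- (g (S n) - 0)) by ring.
  rewrite Rabs_Ropp. auto.
Qed.

Fixpoint sL (l : list nat) (f : nat -> R) : R :=
  match l with nil => 0 | x :: l => f x + sL l f end.

Lemma sum_range_sL n f : sum_range 1 n f = sL (seq 1 n) f.
Proof.
  unfold sum_range. replace (S n - 1)%nat with n by lia.
  induction (seq 1 n); simpl; auto. rewrite IHl; auto.
Qed.

Lemma sL_app l1 l2 f : sL (l1 ++ l2) f = sL l1 f + sL l2 f.
Proof. induction l1; simpl; [ring|]. rewrite IHl1; ring. Qed.

Lemma sL_map l f : sL (map S l) f = sL l (fun i => f (S i)).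
Proof. induction l; simpl; auto. rewrite IHl; auto. Qed.

Lemma sL_ext l f g : (forall i, In i l -> f i = g i) -> sL l f = sL l g.
Proof. induction l; simpl; auto. intros H. rewrite H, IHl; auto. Qed.

Lemma sL_plus l f g : sL l (fun i => f i + g i) = sL l f + sL l g.
Proof. induction l; simpl; [ring|]. rewrite IHl; ring. Qed.

Lemma sL_scal l c f : sL l (fun i => c * f i) = c * sL l f.
Proof. induction l; simpl; [ring|]. rewrite IHl; ring. Qed.

Lemma sL_swap l1 l2 (F : nat -> nat -> R) :
  sL l1 (fun i => sL l2 (fun j => F i j)) = sL l2 (fun j => sL l1 (fun i => F i j)).
Proof.
  induction l1; simpl.
  - induction l2; simpl; auto. rewrite <- IHl2; ring.
  - rewrite IHl1. rewrite <- sL_plus. auto.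
Qed.

Lemma is_sL (l : list nat) (f : nat -> nat -> R) (L : nat -> R) :
  (forall j, In j l -> infinite_sum (f j) (L j)) ->
  infinite_sum (fun n => sL l (fun j => f j n)) (sL l L).
Proof.
  induction l; simpl; intros H.
  - apply is_zero.
  - apply (is_plus (f a) (fun n => sL l (fun j => f j n))); auto.
Qed.

Lemma telem (g : nat -> R) m : Un_cv g 0 ->
  infinite_sum (fun n => g n - g (n + m)%nat) (sL (seq 0 m) g).
Proof.
  intros Hg. induction m.
  - simpl. apply (is_ext (fun _ => 0)). intros; rewrite Nat.add_0_r; ring. apply is_zero.
  - rewrite seq_S, sL_app. simpl.
    apply (is_ext (fun n => (g n - g (n + m)%nat) + (g (n+m)%nat - g (S (n + m))))).
    { intros n. replace (n + S m)%nat with (S (n+m)) by lia. ring. }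
    replace (g m + 0) with (g (0 + m)%nat) by (simpl; ring).
    apply is_plus; auto.
    apply (tele1 (fun n => g (n + m)%nat)).
    intros eps He. destruct (Hg eps He) as [N HN]. exists N. intros n Hn. apply HN. lia.
Qed.

Lemma sv_eq u l : infinite_sum u l -> series_val u = l.
Proof.
  intros H1. unfold series_val.
  apply (uniqueness_sum u); auto.
  apply epsilon_spec. eauto.
Qed.

Lemma sv_comp u v lv : (forall n, 0 <= u n <= v n) -> infinite_sum v lv ->
  infinite_sum u (series_val u).
Proof.
  intros H1 H2. destruct (Rseries_CV_comp u v H1 (exist _ lv H2)) as [l Hl].
  rewrite (sv_eq u l); auto.
Qed.

Lemma nat_above x : 0 <= x -> exists M : nat, x <= INR M.
Proof.
  intros Hx. destruct (archimed x) as [H1 _].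
  assert (0 < up x)%Z by (apply lt_0_IZR; lra).
  exists (Z.to_nat (up x)). rewrite INR_IZR_INZ, Z2Nat.id by lia. lra.
Qed.

Lemma INR_S_pos n : 1 <= INR (S n).
Proof. rewrite S_INR. pose proof (pos_INR n). lra. Qed.

Lemma inv_pow_le a b i : 0 < a <= b -> / b ^ i <= / a ^ i.
Proof.
  intros [Ha Hb]. apply Rinv_le_contravar. apply pow_lt; auto.
  apply pow_incr; lra.
Qed.

Lemma cv_pow_shift x i : 0 <= x -> (1 <= i)%nat ->
  Un_cv (fun n => / (INR (S n) + x) ^ i) 0.
Proof.
  intros Hx Hi. apply (cv_squeeze _ (fun n => / INR (S n))); [|apply cv_inv_S].
  intros n. pose proof (INR_S_pos n). split.
  - left. apply Rinv_0_lt_compat. apply pow_lt. lra.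
  - apply Rinv_le_contravar. lra.
    apply Rle_trans with ((INR (S n) + x) ^ 1). simpl; lra.
    apply Rle_pow; auto. lra.
Qed.

Lemma Hm_conv x i : 0 <= x -> (1 <= i)%nat ->
  infinite_sum (fun n => / INR (S n) ^ i - / (INR (S n) + x) ^ i) (Hm i x).
Proof.
  intros Hx Hi. unfold Hm. destruct (nat_above x Hx) as [M HM].
  pose (g := fun n => / (INR (S n) + 0) ^ i).
  apply (sv_comp _ (fun n => g n - g (n + M)%nat) (sL (seq 0 M) g)).
  2:{ apply telem. apply cv_pow_shift; auto; lra. }
  intros n. unfold g. pose proof (INR_S_pos n).
  replace (INR (S (n + M)) + 0) with (INR (S n) + INR M)
    by (rewrite <- Nat.add_succ_l, plus_INR; ring).
  rewrite Rplus_0_r.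
  pose proof (inv_pow_le (INR (S n)) (INR (S n) + x) i ltac:(lra)).
  pose proof (inv_pow_le (INR (S n) + x) (INR (S n) + INR M) i ltac:(lra)).
  lra.
Qed.

Lemma Hm_diff x i m : 0 <= x -> (1 <= i)%nat ->
  Hm i (x + INR m) - Hm i x = sL (seq 1 m) (fun j => / (INR j + x) ^ i).
Proof.
  intros Hx Hi. pose proof (INR m) as _.
  pose proof (pos_INR m).
  pose proof (Hm_conv (x + INR m) i ltac:(lra) Hi) as A.
  pose proof (Hm_conv x i Hx Hi) as B.
  pose (g := fun n => / (INR (S n) + x) ^ i).
  pose proof (telem g m (cv_pow_shift x i Hx Hi)) as T.
  assert (T' : infinite_sum (fun n =>
     (/ INR (S n) ^ i - / (INR (S n) + (x + INR m)) ^ i)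
     - (/ INR (S n) ^ i - / (INR (S n) + x) ^ i)) (sL (seq 0 m) g)).
  { refine (is_ext _ _ _ _ T). intros n. unfold g.
    rewrite <- Nat.add_succ_l, plus_INR. replace (INR (S n) + INR m + x) with (INR (S n) + (x + INR m)) by ring. ring. }
  pose proof (is_minus _ _ _ _ A B) as C.
  rewrite (uniqueness_sum _ _ _ C T').
  rewrite <- seq_shift, sL_map. unfold g. reflexivity.
Qed.

Lemma zeta_conv s : (2 <= s)%nat ->
  infinite_sum (fun n => / INR (S n) ^ s) (zeta s).
Proof.
  intros Hs. unfold zeta.
  pose (h := fun n => / INR (S n)).
  apply (sv_comp _ (fun n => 2 * (h n - h (S n))) (2 * h 0%nat)).
  2:{ apply is_scal. apply tele1. apply cv_inv_S. }
  intros n. unfold h. pose proof (INR_S_pos n) as HN.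
  set (N := INR (S n)) in *.
  replace (INR (S (S n))) with (N + 1) by (unfold N; rewrite (S_INR (S n)); ring).
  split. left. apply Rinv_0_lt_compat. apply pow_lt. lra.
  apply Rle_trans with (/ N ^ 2).
  - apply Rinv_le_contravar. apply pow_lt; lra. apply Rle_pow; auto.
  - replace (2 * (/ N - / (N + 1))) with (/ N ^ 2 + (N - 1) / (N ^ 2 * (N + 1))) by (field; lra).
    assert (0 <= (N - 1) / (N ^ 2 * (N + 1))).
    { apply Rdiv_le_0_compat. lra. apply Rmult_lt_0_compat. apply pow_lt; lra. lra. }
    lra.
Qed.

Lemma PF (N c : R) (q : nat) : 0 < N -> 0 < c ->
  / (N ^ S q * (N + c)) =
  sL (seq 1 q) (fun i => (-1) ^ (i - 1) * / c ^ i * / N ^ (S q + 1 - i))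
  + (-1) ^ q * / c ^ S q * (/ N ^ 1 - / (N + c) ^ 1).
Proof.
  intros HN Hc. induction q.
  - simpl. field. lra.
  - change (seq 1 (S q)) with (1%nat :: seq 2 q). cbn [sL].
    rewrite <- (seq_shift q 1), sL_map.
    assert (E : sL (seq 1 q) (fun i => (-1) ^ (S i - 1) * / c ^ S i * / N ^ (S (S q) + 1 - S i))
       = - / c * sL (seq 1 q) (fun i => (-1) ^ (i - 1) * / c ^ i * / N ^ (S q + 1 - i))).
    { rewrite <- sL_scal. apply sL_ext. intros i Hi. apply in_seq in Hi. destruct i as [|i]; [lia|].
      replace (S (S q) + 1 - S (S i))%nat with (S q + 1 - S i)%nat by lia.
      replace (S (S i) - 1)%nat with (S i) by lia.
      replace (S i - 1)%nat with i by lia.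
      set (E := N ^ (S q + 1 - S i)). assert (E <> 0) by (apply pow_nonzero; lra).
      simpl. field. repeat split; try lra. apply pow_nonzero; lra. }
    rewrite E.
    replace (/ (N ^ S (S q) * (N + c))) with (/ c * / N ^ S (S q) - / c * / (N ^ S q * (N + c))).
    2:{ simpl. field. repeat split; try lra. apply pow_nonzero; lra. }
    rewrite IHq.
    replace (S (S q) + 1 - 1)%nat with (S (S q)) by lia.
    set (X := sL (seq 1 q) _).
    assert (N ^ q <> 0) by (apply pow_nonzero; lra).
    assert (c ^ q <> 0) by (apply pow_nonzero; lra).
    simpl. field. repeat split; lra.
Qed.

Theorem mainTheorem9 (p k r : nat) (alpha : R)
  (hp : (2 <= p)%nat) (hrk : (r < k)%nat) (ha : INR k < alpha) :
  infinite_sum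
    (fun n => (H (INR (S n) + alpha - INR r) - H (INR (S n) + alpha - INR k))
              / (INR (S n)) ^ p)
    (sum_range 1 (p - 1)
       (fun i => (-1) ^ (i - 1) * zeta (p + 1 - i)
                 * (Hm i (alpha - INR r) - Hm i (alpha - INR k)))
     + (-1) ^ (p - 1)
       * sum_range 1 (k - r)
           (fun j => H (INR j + alpha - INR k) / (INR j + alpha - INR k) ^ p))
  /\
  (forall i : nat, (1 <= i)%nat ->
     Hm i (alpha - INR r) - Hm i (alpha - INR k)
     = sum_range 1 (k - r) (fun j => / (INR j + alpha - INR k) ^ i)).
Proof.
  set (a := alpha - INR k). assert (Ha : 0 < a) by (unfold a; lra).
  set (m := (k - r)%nat).
  assert (Em : forall y, y + alpha - INR r = (y + alpha - INR k) + INR m).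
  { intros y. unfold m. rewrite minus_INR by lia. ring. }
  assert (P2 : forall i : nat, (1 <= i)%nat ->
     Hm i (alpha - INR r) - Hm i (alpha - INR k)
     = sum_range 1 m (fun j => / (INR j + alpha - INR k) ^ i)).
  { intros i Hi. replace (alpha - INR r) with (a + INR m)
      by (pose proof (Em 0); unfold a; lra).
    fold a. rewrite Hm_diff by (try lia; lra). rewrite sum_range_sL.
    apply sL_ext. intros j _. unfold a. f_equal. f_equal. ring. }
  split; [|exact P2].
  set (c := fun j => INR j + a).
  assert (Hc : forall j, 0 < c j) by (intros j; unfold c; pose proof (pos_INR j); lra).
  apply (is_ext (fun n => sL (seq 1 m) (fun j =>
      sL (seq 1 (p - 1)) (fun i => (-1) ^ (i - 1) * / c j ^ i * / INR (S n) ^ (p + 1 - i))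
      + (-1) ^ (p - 1) * / c j ^ p * (/ INR (S n) ^ 1 - / (INR (S n) + c j) ^ 1)))).
  { intros n. pose proof (INR_S_pos n) as HN. set (N := INR (S n)) in *.
    unfold H. rewrite Em. rewrite Hm_diff by (try lia; unfold a in Ha; lra).
    unfold Rdiv. rewrite Rmult_comm, <- sL_scal. apply sL_ext. intros j _.
    pose proof (PF N (c j) (p - 1) ltac:(lra) (Hc j)) as P.
    replace (S (p - 1)) with p in P by lia. rewrite <- P.
    unfold c, a. rewrite pow_1. rewrite Rinv_mult. f_equal. f_equal. ring. }
  fold a in P2.
  replace (sum_range 1 (p - 1)
       (fun i : nat =>
        (-1) ^ (i - 1) * zeta (p + 1 - i) * (Hm i (alpha - INR r) - Hm i a)) +
     (-1) ^ (p - 1) *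
     sum_range 1 m
       (fun j : nat =>
        H (INR j + alpha - INR k) / (INR j + alpha - INR k) ^ p))
   with (sL (seq 1 m) (fun j =>
      sL (seq 1 (p - 1)) (fun i => (-1) ^ (i - 1) * / c j ^ i * zeta (p + 1 - i))
      + (-1) ^ (p - 1) * / c j ^ p * H (c j))).
  - apply is_sL. intros j _. apply is_plus.
    + apply is_sL. intros i Hi. apply in_seq in Hi.
      apply (is_scal ((-1) ^ (i - 1) * / c j ^ i) (fun n => / INR (S n) ^ (p + 1 - i))).
      apply zeta_conv. lia.
    + apply (is_scal ((-1) ^ (p - 1) * / c j ^ p)
         (fun n => / INR (S n) ^ 1 - / (INR (S n) + c j) ^ 1)).
      apply Hm_conv. left; auto. lia.
  - rewrite sL_plus, sL_swap, !sum_range_sL. f_equal.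
    + apply sL_ext. intros i Hi. apply in_seq in Hi.
      rewrite P2 by lia. rewrite sum_range_sL.
      rewrite <- sL_scal. apply sL_ext. intros j _.
      unfold c, a. replace (INR j + alpha - INR k) with (INR j + (alpha - INR k)) by ring. ring.
    + rewrite <- sL_scal. apply sL_ext. intros j _.
      unfold c, a. replace (INR j + alpha - INR k) with (INR j + (alpha - INR k)) by ring.
      unfold Rdiv. ring.
Qed.
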